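(* Let $R$ be a commutative ring with unit, $X$ a set, $F\subseteq R\langle X\rangle$ and $f\in(F)$, the two-sided ideal generated by $F$. Then for every labelled quiver $Q$ with labels $X$ such that all elements of $F$ are uniformly compatible with $Q$, we have: $f$ is compatible with $Q$ if and only if $f$ is a $Q$-consequence of $F$.
   Context: $R\langle X\rangle$ is the free algebra of noncommutative polynomials over $R$ in indeterminates $X$, with monomials the words in $\langle X\rangle$ (including the empty word $1$); $\operatorname{supp}(f)$ is the set of monomials with nonzero coefficient. A labelled quiver $Q=(V,E,X,s,t,l)$ has vertices $V$, edges $E$, source/target maps $s,t:E\to V$ and labelling $l:E\to X$. A nonempty path $p=e_n\cdots e_1$ (with $s(e_{i+1})=t(e_i)$) has label $l(e_n)\cdots l(e_1)$, source $s(e_1)$, target $t(e_n)$; each vertex $v$ has an empty path with label $1$ and source and target $v$. For a monomial $m$, $\sigma(m)=\{(s(p),t(p)) : p \text{ a path with } l(p)=m\}$; for a polynomial $f$, $\sigma(f)=\bigcap_{m\in\operatorname{supp}(f)}\sigma(m)$ (so $\sigma(0)=V\times V$). $f$ is compatible with $Q$ if $\sigma(f)\neq\emptyset$, and uniformly compatible if it is compatible and all $m\in\operatorname{supp}(f)$ have the same set $\sigma(m)$; $R\langle X\rangle_Q$ is the set of uniformly compatible polynomials. For $F\subseteq R\langle X\rangle_Q$, a polynomial $f$ is a $Q$-consequence of $F$ if $f$ is compatible with $Q$ and there are finitely many $a_i,b_i\in R\langle X\rangle_Q$ and $f_i\in F$ with $f=\sum_i a_if_ib_i$ and $\sigma(a_if_ib_i)\supseteq\sigma(f)$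 for every $i$ (the empty sum is allowed). *)

(* Defs.v *)
From HB Require Import structures.
From Stdlib Require List.
From mathcomp Require Import all_boot all_algebra.
Set Implicit Arguments. Unset Strict Implicit. Unset Printing Implicit Defensive.
Import GRing.Theory.
Local Open Scope ring_scope.

(* Noncommutative polynomials R<X>: coefficient functions on words (seq X),
   the empty word [::] being the monomial 1; word x1 x2 ... xn is read left to
   right.  A polynomial is such a function with finite support. *)
Definition ncpoly (R : Type) (X : Type) := seq X -> R.

Section NC.
Variables (R : comPzRingType) (X : Type).

Definition fin_supp (p : ncpoly R X) : Prop :=
  exists s : seq (seq X), forall m, p m != 0 -> List.In m s.

Definition in_supp (p : ncpoly R X) (m : seq X) : Prop := p m != 0.

Definition ncmul (p q : ncpoly R X) : ncpoly R X :=
  fun m => \sum_(i < (size m).+1) p (take i m) * q (drop i m).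

Definition ncsum3 (l : seq (ncpoly R X * ncpoly R X * ncpoly R X)) : ncpoly R X :=
  fun m => \sum_(t <- l) ncmul (ncmul t.1.1 t.1.2) t.2 m.

Definition nceq (p q : ncpoly R X) : Prop := forall m, p m = q m.

Definition in_ideal (F : ncpoly R X -> Prop) (f : ncpoly R X) : Prop :=
  exists l : seq (ncpoly R X * ncpoly R X * ncpoly R X),
    (forall t, List.In t l -> [/\ fin_supp t.1.1, F t.1.2 & fin_supp t.2]) /\
    nceq f (ncsum3 l).
End NC.

Record quiver (X : Type) := Quiver {
  qV : Type; qE : Type;
  qs : qE -> qV; qt : qE -> qV;
  ql : qE -> X }.

Section Quiver.
Variables (X : Type) (Q : quiver X).

(* qpath v m u : there is a path with label m, source u and target v.
   A path e_n ... e_1 has label l(e_n) ... l(e_1), source s(e_1), target t(e_n);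
   the empty path at v has label [::] (= 1) and source = target = v. *)
Inductive qpath : qV Q -> seq X -> qV Q -> Prop :=
| qpath_nil v : qpath v [::] v
| qpath_cons (e : qE Q) m u :
    qpath (qs e) m u -> qpath (qt e) (ql e :: m) u.

Definition sigma_mon (m : seq X) (u v : qV Q) : Prop := qpath v m u.

Variable R : comPzRingType.

Definition sigma_pol (f : ncpoly R X) (u v : qV Q) : Prop :=
  forall m, in_supp f m -> sigma_mon m u v.

Definition compatible (f : ncpoly R X) : Prop :=
  exists u v, sigma_pol f u v.

Definition unif_compatible (f : ncpoly R X) : Prop :=
  compatible f /\
  forall m m', in_supp f m -> in_supp f m' ->
    forall u v, sigma_mon m u v <-> sigma_mon m' u v.

Definition in_RXQ (f : ncpoly R X) : Prop := fin_supp f /\ unif_compatible f.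

Definition Q_consequence (F : ncpoly R X -> Prop) (f : ncpoly R X) : Prop :=
  compatible f /\
  exists l : seq (ncpoly R X * ncpoly R X * ncpoly R X),
    (forall t, List.In t l ->
       [/\ in_RXQ t.1.1, F t.1.2, in_RXQ t.2 &
           forall u v, sigma_pol f u v ->
             sigma_pol (ncmul (ncmul t.1.1 t.1.2) t.2) u v]) /\
    nceq f (ncsum3 l).
End Quiver.

(* Main.v *)
Require Import Defs.
From mathcomp Require Import all_boot all_algebra.
From Stdlib Require Import ClassicalEpsilon Classical.
Set Implicit Arguments. Unset Strict Implicit. Unset Printing Implicit Defensive.
Import GRing.Theory.
Local Open Scope ring_scope.

Section Aux.
Variables (R : comPzRingType) (X : Type) (Q : quiver X).

Lemma qpath_cat (m1 m2 : seq X) (u v : qV Q) :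
  qpath v (m1 ++ m2) u <-> exists b, qpath v m1 b /\ qpath b m2 u.
Proof.
elim: m1 v => [|x m1 IH] v /=.
  split; first by move=> H; exists v; split=> //; constructor.
  by move=> [b [H1 H2]]; inversion H1; subst.
split.
  move=> H; inversion H as [|e m u0 Hp]; subst.
  have [b [Hb1 Hb2]] := (proj1 (IH _)) Hp.
  by exists b; split=> //; constructor.
move=> [b [H1 H2]]; inversion H1; subst.
by constructor; apply/IH; exists b.
Qed.

Lemma qpath_cat3 (m1 m2 m3 : seq X) (u v : qV Q) :
  qpath v (m1 ++ m2 ++ m3) u <->
  exists c b, [/\ qpath v m1 c, qpath c m2 b & qpath b m3 u].
Proof.
split.
  move/qpath_cat=> [c [H1 /qpath_cat [b [H2 H3]]]].
  by exists c, b.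
move=> [c [b [H1 H2 H3]]]; apply/qpath_cat; exists c; split=> //.
by apply/qpath_cat; exists b.
Qed.

Lemma ncmul_nz (p q : ncpoly R X) m : ncmul p q m != 0 ->
  exists i : 'I_(size m).+1, (p (take i m) != 0) /\ (q (drop i m) != 0).
Proof.
move=> H; apply: NNPP => Hn; move/eqP: H; apply.
apply: big1 => i _; apply/eqP; apply: negbNE; apply/negP => Hi.
apply: Hn; exists i; split; apply/eqP => E; move: Hi; by rewrite E ?mul0r ?mulr0 eqxx.
Qed.

Definition mono (u : seq X) (p : ncpoly R X) := forall m, p m != 0 -> m = u.

Lemma supp_term A g B u w m : mono u A -> mono w B ->
  ncmul (ncmul A g) B m != 0 ->
  exists m', [/\ m = u ++ m' ++ w, g m' != 0, A u != 0 & B w != 0].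
Proof.
move=> HA HB /ncmul_nz [i [H1 H2]].
have Ew := HB _ H2.
have [j [H3 H4]] := ncmul_nz H1.
have Eu := HA _ H3.
exists (drop j (take i m)); split=> //; last by rewrite -Ew.
  by rewrite -Eu -Ew catA !cat_take_drop.
by rewrite -Eu.
Qed.

Lemma mono_RXQ u (A : ncpoly R X) (x y : qV Q) : mono u A -> qpath y u x -> in_RXQ Q A.
Proof.
move=> HA Hp; split.
  by exists [:: u] => m /HA ->; left.
split.
  by exists x, y => m /HA ->.
by move=> m m' /HA -> /HA ->.
Qed.

Lemma kept_of_nz (f A g B : ncpoly R X) u w m (x0 y0 : qV Q) :
  unif_compatible Q g -> mono u A -> mono w B ->
  ncmul (ncmul A g) B m != 0 -> sigma_mon m x0 y0 ->
  (forall x y : qV Q, sigma_pol f x y -> sigma_mon m x y) ->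
  [/\ in_RXQ Q A, in_RXQ Q B &
      forall x y : qV Q, sigma_pol f x y -> sigma_pol (ncmul (ncmul A g) B) x y].
Proof.
move=> [_ Hg] HA HB Hm H0 Hf.
have [m' [Em Hg' HAu HBw]] := supp_term HA HB Hm.
move: H0; rewrite /sigma_mon Em => /qpath_cat3 [c [b [H1 H2 H3]]].
split; first exact: mono_RXQ HA H1.
  exact: mono_RXQ HB H3.
move=> x y Hxy m0 Hm0.
have [m0' [Em0 Hg0 _ _]] := supp_term HA HB Hm0.
have := Hf _ _ Hxy; rewrite /sigma_mon Em => /qpath_cat3 [c' [b' [K1 K2 K3]]].
rewrite /sigma_mon Em0; apply/qpath_cat3; exists c', b'; split=> //.
by apply/(Hg _ _ Hg0 Hg' b' c').
Qed.

Definition dec (P : Prop) : bool := if excluded_middle_informative P then true else false.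
Lemma decP P : dec P = true <-> P.
Proof. by rewrite /dec; case: excluded_middle_informative. Qed.
Lemma decF P : dec P = false <-> ~ P.
Proof. by rewrite /dec; case: excluded_middle_informative. Qed.

Fixpoint splitp (p : ncpoly R X) (s : seq (seq X)) : seq (ncpoly R X) :=
  match s with
  | [::] => [::]
  | u :: s' => (fun m => if dec (m = u) then p m else 0)
                 :: splitp (fun m => if dec (m = u) then 0 else p m) s'
  end.

Lemma split_sum s : forall p, (forall m, p m != 0 -> List.In m s) ->
  forall m, p m = \sum_(A <- splitp p s) A m.
Proof.
elim: s => [|u s IH] p Hp m /=.
  rewrite big_nil; apply/eqP; apply: negbNE; apply/negP => /Hp [].
rewrite big_cons -IH.
  by case E: (dec (m = u)); rewrite ?addr0 ?add0r.
move=> m1; case E: (dec (m1 = u)); first by rewrite eqxx.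
move=> /Hp [Hu|//]; by move/decF: E; rewrite Hu.
Qed.

Lemma split_mono s : forall p A, List.In A (splitp p s) -> exists u, mono u A.
Proof.
elim: s => [|u s IH] p A //= [<-|/IH //].
exists u => m; case E: (dec (m = u)); last by rewrite eqxx.
by move/decP: E.
Qed.

Lemma ncmul_suml I (s : seq I) (G : I -> ncpoly R X) p q m :
  (forall m, p m = \sum_(i <- s) G i m) ->
  ncmul p q m = \sum_(i <- s) ncmul (G i) q m.
Proof.
move=> H; rewrite /ncmul; under eq_bigr do rewrite H mulr_suml.
by rewrite exchange_big.
Qed.

Lemma ncmul_sumr I (s : seq I) (G : I -> ncpoly R X) p q m :
  (forall m, q m = \sum_(i <- s) G i m) ->
  ncmul p q m = \sum_(i <- s) ncmul p (G i) m.
Proof.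
move=> H; rewrite /ncmul; under eq_bigr do rewrite H mulr_sumr.
by rewrite exchange_big.
Qed.

Lemma In_cat T (t : T) s1 s2 : List.In t (s1 ++ s2) -> List.In t s1 \/ List.In t s2.
Proof. elim: s1 => [|x s1 IH] /=; [by right | by move=> [->|/IH [] ]; auto]. Qed.

Lemma In_map T U (f : T -> U) t s : List.In t (map f s) -> exists x, List.In x s /\ t = f x.
Proof. elim: s => [|x s IH] //= [<-|/IH [y [H1 H2]]]; [exists x|exists y]; auto. Qed.

Lemma In_flatten T (t : T) ss : List.In t (flatten ss) -> exists s, List.In s ss /\ List.In t s.
Proof.
elim: ss => [|s ss IH] //= H0; case: (In_cat H0) => [H|/IH [s' [H1 H2]]]; [exists s|exists s']; auto.
Qed.

Lemma In_filter T (t : T) p s : List.In t (filter p s) -> List.In t s /\ p t.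
Proof.
elim: s => [|x s IH] //=; case E: (p x).
  by move=> [<-|/IH []]; auto.
by move/IH=> []; auto.
Qed.

Lemma sum0_In T (s : seq T) (P : pred T) (G : T -> R) :
  (forall t, List.In t s -> P t -> G t = 0) -> \sum_(t <- s | P t) G t = 0.
Proof.
elim: s => [|x s IH] H; first by rewrite big_nil.
rewrite big_cons IH; last by move=> t Ht; apply: H; right.
by case: ifP => // Px; rewrite H ?add0r //; left.
Qed.

Definition trip := (ncpoly R X * ncpoly R X * ncpoly R X)%type.

Lemma expand (F : ncpoly R X -> Prop) (l : seq trip) :
  (forall t, List.In t l -> [/\ fin_supp t.1.1, F t.1.2 & fin_supp t.2]) ->
  exists l' : seq trip,
    (forall t, List.In t l' -> [/\ exists u, mono u t.1.1, F t.1.2 & exists w, mono w t.2])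
    /\ forall m, ncsum3 l' m = ncsum3 l m.
Proof.
elim: l => [|t l IH] Hl; first by exists [::].
have [l' [H1 H2]] := IH (fun t' Ht' => Hl t' (or_intror Ht')).
have [[sa Ha] Ft [sb Hb]] := Hl t (or_introl erefl).
exists (flatten [seq [seq (A, t.1.2, B) | B <- splitp t.2 sb] | A <- splitp t.1.1 sa] ++ l').
split.
  move=> t' H0; case: (In_cat H0) => [|/H1 //].
  move=> Hf; have [s [Hs Hts]] := In_flatten Hf.
  have [A [HA Es]] := In_map Hs; subst s.
  have [B [HB Et]] := In_map Hts; subst t'.
  split=> //; [exact: split_mono HA | exact: split_mono HB].
move=> m; rewrite /ncsum3 big_cat /= big_cons; congr (_ + _); last exact: H2.
rewrite big_flatten /= big_map.
rewrite (@ncmul_suml _ (splitp t.1.1 sa) (fun A => ncmul A t.1.2)); last first.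
  by move=> m1; apply: ncmul_suml; apply: split_sum.
apply: eq_bigr => A _; rewrite big_map.
by apply/esym/ncmul_sumr/split_sum.
Qed.

End Aux.

Theorem corollary4p3 (R : comPzRingType) (X : Type)
  (F : ncpoly R X -> Prop) (f : ncpoly R X) :
  (forall g, F g -> fin_supp g) ->
  fin_supp f -> in_ideal F f ->
  forall Q : quiver X,
    (forall g, F g -> unif_compatible Q g) ->
    (compatible Q f <-> Q_consequence Q F f).
Proof.
move=> _ _ [l [Hl Heq]] Q Hg.
split; last by case.
move=> Hc; have [x0 [y0 Hf0]] := Hc.
have [l' [H1 H2]] := expand Hl.
pose P := fun t : trip R X => in_RXQ Q t.1.1 /\ in_RXQ Q t.2 /\
  forall x y : qV Q, sigma_pol f x y -> sigma_pol (ncmul (ncmul t.1.1 t.1.2) t.2) x y.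
split=> //; exists (filter (fun t => dec (P t)) l'); split.
  move=> t Hin; have [Ht /decP [HA [HB HS]]] := In_filter Hin; have [_ Ft _] := H1 t Ht.
  by split.
move=> m.
case: (classic (forall x y : qV Q, sigma_pol f x y -> sigma_mon m x y)) => Hm.
  rewrite Heq -H2 /ncsum3 big_filter (bigID (fun t => dec (P t))) /=.
  rewrite [X in _ + X]sum0_In ?addr0 //.
  move=> t Ht /= Hn; apply/eqP; apply: negbNE; apply/negP=> Hnz.
  have [[u Hu] Ft [w Hw]] := H1 t Ht.
  have [HA HB HS] := kept_of_nz (Hg _ Ft) Hu Hw Hnz (Hm _ _ Hf0) Hm.
  by move: Hn; have -> : dec (P t) = true by apply/decP.
have Hfm : f m = 0.
  apply/eqP/negbNE/negP => Hnz; apply: Hm => x y Hxy; exact: Hxy m Hnz.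
rewrite Hfm /ncsum3 big_filter sum0_In //.
move=> t Ht /decP [_ [_ HS]]; apply/eqP/negbNE/negP=> Hnz.
by apply: Hm => x y Hxy; exact: HS x y Hxy m Hnz.
Qed.
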